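(* Let $A$ be a commutative subalgebra of a $K$-algebra $E$, let $A'$ be a non-empty subset of $A$, let $\Delta=\{\mathrm{ad}_a\mid a\in A'\}$, let $\mathfrak{a}$ be a nonzero ideal of $N_\Delta(E)$ and $\mathfrak{a}_0=\mathfrak{a}\cap N_\Delta(E)_0=\mathfrak{a}\cap E^\Delta$. Then: (1) $\mathfrak{a}_0$ is a nonzero ideal of the algebra $N_\Delta(E)_0=E^\Delta=C_E(A')$, and $\mathfrak{a}'=N_\Delta(E)\mathfrak{a}_0N_\Delta(E)$ is a nonzero ideal of $N_\Delta(E)$ with $\mathfrak{a}'\cap N_\Delta(E)_0=\mathfrak{a}_0$. (2) If, in addition, $N_\Delta(E)_0$ is commutative, then $[N_\Delta(E)_1,\mathfrak{a}_0]\subseteq\mathfrak{a}_0$.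
   Context: $\mathrm{ad}_a(f)=[a,f]=af-fa$. For $i\geq 1$, $\Delta^i=\{\delta_1\cdots\delta_i\mid\delta_j\in\Delta\}$; $N_\Delta(E)_i=\{e\in E\mid\Delta^{i+1}e=0\}$ for $i\geq0$, $N_\Delta(E)=\bigcup_{i\ge0}N_\Delta(E)_i$, $E^\Delta=\bigcap_{\delta\in\Delta}\ker\delta$. $C_E(A')=\{e\in E\mid ea=ae \text{ for all } a\in A'\}$. *)

(* Defs.v *)
From HB Require Import structures.
From mathcomp Require Import all_boot all_order all_algebra.
Set Implicit Arguments. Unset Strict Implicit. Unset Printing Implicit Defensive.
Import GRing.Theory.
Local Open Scope ring_scope.

Definition ad (K : fieldType) (E : algType K) (a f : E) : E := a * f - f * a.

Definition iter_ad (K : fieldType) (E : algType K) (s : seq E) (e : E) : E :=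
  foldr (@ad K E) e s.

(* N_Delta(E)_i = { e | Delta^{i+1} e = 0 }, Delta = { ad_a | a in A' } *)
Definition NDelta_i (K : fieldType) (E : algType K) (A' : E -> Prop) (i : nat)
  (e : E) : Prop :=
  forall s : seq E, size s = i.+1 -> (forall a, a \in s -> A' a) ->
    iter_ad s e = 0.

Definition NDelta (K : fieldType) (E : algType K) (A' : E -> Prop) (e : E) : Prop :=
  exists i, NDelta_i A' i e.

Definition fixed_Delta (K : fieldType) (E : algType K) (A' : E -> Prop) (e : E) : Prop :=
  forall a, A' a -> ad a e = 0.

Definition centralizer (K : fieldType) (E : algType K) (A' : E -> Prop) (e : E) : Prop :=
  forall a, A' a -> e * a = a * e.

Definition is_subalgebra (K : fieldType) (E : algType K) (A : E -> Prop) : Prop :=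
  [/\ A 0, A 1, (forall x y, A x -> A y -> A (x + y)),
      (forall (c : K) x, A x -> A (c *: x)) & (forall x y, A x -> A y -> A (x * y))].

Definition is_commutative_on (K : fieldType) (E : algType K) (S : E -> Prop) : Prop :=
  forall x y, S x -> S y -> x * y = y * x.

Definition is_ideal_of (K : fieldType) (E : algType K) (S I : E -> Prop) : Prop :=
  [/\ (forall x, I x -> S x), I 0, (forall x y, I x -> I y -> I (x + y)),
      (forall (c : K) x, I x -> I (c *: x)) &
      ((forall s x, S s -> I x -> I (s * x)) /\ (forall s x, S s -> I x -> I (x * s)))].

Definition nonzero_set (K : fieldType) (E : algType K) (S : E -> Prop) : Prop :=
  exists x, S x /\ x <> 0.

Definition set_inter (K : fieldType) (E : algType K) (S T : E -> Prop) (e : E) : Prop :=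
  S e /\ T e.

Definition prod_set3 (K : fieldType) (E : algType K) (S T U : E -> Prop) (e : E) : Prop :=
  exists l : seq (E * E * E),
    (forall p, p \in l -> [/\ S p.1.1, T p.1.2 & U p.2]) /\
    e = \sum_(p <- l) p.1.1 * p.1.2 * p.2.

Definition comm_set (K : fieldType) (E : algType K) (S T : E -> Prop) (e : E) : Prop :=
  exists l : seq (E * E),
    (forall p, p \in l -> S p.1 /\ T p.2) /\
    e = \sum_(p <- l) ad p.1 p.2.

Definition subset_of (K : fieldType) (E : algType K) (S T : E -> Prop) : Prop :=
  forall x, S x -> T x.

Definition set_eq (K : fieldType) (E : algType K) (S T : E -> Prop) : Prop :=
  forall x, S x <-> T x.

(* Main.v *)
Require Import Defs.
From HB Require Import structures.
From mathcomp Require Import all_boot all_order all_algebra.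
From Stdlib Require Import Classical.
Import GRing.Theory.
Local Open Scope ring_scope.

Lemma adD (K : fieldType) (E : algType K) (b x y : E) : ad b (x + y) = ad b x + ad b y.
Proof. by rewrite /ad mulrDl mulrDr opprD addrACA. Qed.

Lemma adN (K : fieldType) (E : algType K) (b x : E) : ad b (- x) = - ad b x.
Proof. by rewrite /ad mulrN mulNr opprK opprB addrC. Qed.

Lemma adZ (K : fieldType) (E : algType K) (b x : E) c : ad b (c *: x) = c *: ad b x.
Proof. by rewrite /ad -scalerAr -scalerAl scalerBr. Qed.

Lemma ad0 (K : fieldType) (E : algType K) (b : E) : ad b 0 = 0.
Proof. by rewrite /ad mul0r mulr0 subrr. Qed.

Lemma adM (K : fieldType) (E : algType K) (b x y : E) :
  ad b (x * y) = ad b x * y + x * ad b y.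
Proof. by rewrite /ad mulrBl mulrBr !mulrA addrA subrK. Qed.

Lemma N0P (K : fieldType) (E : algType K) (A' : E -> Prop) e :
  NDelta_i A' 0 e <-> forall b, A' b -> ad b e = 0.
Proof.
split=> [H b Hb | H s].
- by apply: (H [:: b]) => // a; rewrite inE => /eqP ->.
- case: s => [|b [|c s]] //= _ Hs.
  by apply: H; apply: Hs; rewrite inE eqxx.
Qed.

Lemma NSP (K : fieldType) (E : algType K) (A' : E -> Prop) i e :
  NDelta_i A' i.+1 e <-> forall b, A' b -> NDelta_i A' i (ad b e).
Proof.
split=> [H b Hb s Hsz Hs | H s].
- have := H (rcons s b); rewrite /iter_ad foldr_rcons; apply.
    by rewrite size_rcons Hsz.
  by move=> a; rewrite mem_rcons inE => /orP [/eqP -> | /Hs].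
- case/lastP: s => [|s b] // Hsz Hs.
  rewrite /iter_ad foldr_rcons; apply: H.
    by apply: Hs; rewrite mem_rcons inE eqxx.
    by move: Hsz; rewrite size_rcons => -[].
  by move=> a Ha; apply: Hs; rewrite mem_rcons inE Ha orbT.
Qed.

Lemma NiD (K : fieldType) (E : algType K) (A' : E -> Prop) i :
  forall x y, NDelta_i A' i x -> NDelta_i A' i y -> NDelta_i A' i (x + y).
Proof.
elim: i => [|i IH] x y.
- move=> /N0P Hx /N0P Hy; apply/N0P => b Hb; by rewrite adD Hx // Hy // addr0.
- move=> /NSP Hx /NSP Hy; apply/NSP => b Hb; rewrite adD; exact: IH (Hx b Hb) (Hy b Hb).
Qed.

Lemma NiZ (K : fieldType) (E : algType K) (A' : E -> Prop) i c :
  forall x, NDelta_i A' i x -> NDelta_i A' i (c *: x).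
Proof.
elim: i => [|i IH] x.
- move=> /N0P Hx; apply/N0P => b Hb; by rewrite adZ Hx // scaler0.
- move=> /NSP Hx; apply/NSP => b Hb; rewrite adZ; exact: IH (Hx b Hb).
Qed.

Lemma Ni0 (K : fieldType) (E : algType K) (A' : E -> Prop) i :
  NDelta_i A' i 0.
Proof.
elim: i => [|i IH].
- by apply/N0P => b _; rewrite ad0.
- by apply/NSP => b _; rewrite ad0.
Qed.

Lemma NiM (K : fieldType) (E : algType K) (A' : E -> Prop) n :
  forall i j x y, (i + j = n)%N -> NDelta_i A' i x -> NDelta_i A' j y ->
  NDelta_i A' n (x * y).
Proof.
elim: n => [|n IH] i j x y Hn Hx Hy.
- case: i Hn Hx => [|//] ; case: j Hy => [|//] Hy _ Hx.
  apply/N0P => b Hb; by rewrite adM (proj1 (N0P _ _ _ _) Hx b Hb)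
    (proj1 (N0P _ _ _ _) Hy b Hb) mul0r mulr0 addr0.
- apply/NSP => b Hb; rewrite adM; apply: NiD.
  + case: i Hn Hx => [|i] Hn Hx.
      by rewrite (proj1 (N0P _ _ _ _) Hx b Hb) mul0r; apply: Ni0.
    apply: (IH i j) => //; first by move: Hn; rewrite addSn => -[].
    exact: (proj1 (NSP _ _ _ _ _) Hx b Hb).
  + case: j Hn Hy => [|j] Hn Hy.
      by rewrite (proj1 (N0P _ _ _ _) Hy b Hb) mulr0; apply: Ni0.
    apply: (IH i j) => //; first by move: Hn; rewrite addnS => -[].
    exact: (proj1 (NSP _ _ _ _ _) Hy b Hb).
Qed.

Theorem theorem1p7 (K : fieldType) (E : algType K) (A A' a : E -> Prop) :
  is_subalgebra A -> is_commutative_on A ->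
  (forall x, A' x -> A x) -> (exists x, A' x) ->
  is_ideal_of (NDelta A') a -> nonzero_set a ->
  let N := NDelta A' in
  let N0 := NDelta_i A' 0 in
  let a0 := set_inter a N0 in
  (* (1) *)
  ([/\ set_eq N0 (fixed_Delta A'), set_eq (fixed_Delta A') (centralizer A'),
       is_ideal_of N0 a0 /\ nonzero_set a0 &
       let a' := prod_set3 N a0 N in
       [/\ is_ideal_of N a', nonzero_set a' & set_eq (set_inter a' N0) a0]]
  /\
  (* (2) *)
  (is_commutative_on N0 ->
     subset_of (comm_set (NDelta_i A' 1) a0) a0)).
Proof.
move=> Hsub Hcom HA'A Hne [HaN Ha0 HaD HaZ [HaL HaR]] Hnz; cbv zeta.
have NM : forall x y, NDelta A' x -> NDelta A' y -> NDelta A' (x * y).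
  by move=> x y [i Hx] [j Hy]; exists (i + j)%N; apply: (@NiM _ _ _ (i+j)%N i j).
have NZ : forall c x, NDelta A' x -> NDelta A' (c *: x).
  by move=> c x [i Hx]; exists i; apply: NiZ.
have N1 : NDelta A' 1.
  by exists 0%N; apply/N0P => b _; rewrite /ad mulr1 mul1r subrr.
have a_ad : forall b x, A' b -> a x -> a (ad b x).
  move=> b x Hb Hx.
  have Nb : NDelta A' b.
    exists 0%N; apply/N0P => c Hc; rewrite /ad Hcom ?subrr //; exact: HA'A.
  rewrite /ad -scaleN1r; apply: (HaD); first exact: (HaL).
  by apply: (HaZ); apply: (HaR).
have a0nz : nonzero_set (set_inter a (NDelta_i A' 0)).
  case: Hnz => x [ax xnz]; case: (HaN x ax) => i Hi.
  elim: i x ax xnz Hi => [|i IH] x ax xnz Hi; first by exists x.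
  case: (classic (exists b, A' b /\ ad b x <> 0)) => [[b [Hb Hbx]]|Hn].
    apply: (IH (ad b x)) => //; first exact: a_ad.
    exact: (proj1 (NSP _ _ _ _ _) Hi b Hb).
  exists x; split=> //; split=> //; apply/N0P => b Hb.
  by apply: NNPP => H; apply: Hn; exists b.
have a'a : forall x, prod_set3 (NDelta A') (set_inter a (NDelta_i A' 0))
    (NDelta A') x -> a x.
  move=> x [l [Hl ->]]; elim: l Hl => [|p l IH] Hl; first by rewrite big_nil.
  rewrite big_cons; apply: (HaD); last by apply: IH => q Hq; apply: Hl; rewrite inE Hq orbT.
  have [H1 [H2 _] H3] := Hl p (mem_head _ _).
  by apply: (HaR) => //; apply: (HaL).
have single : forall x, set_inter a (NDelta_i A' 0) x ->
    prod_set3 (NDelta A') (set_inter a (NDelta_i A' 0)) (NDelta A') x.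
  move=> x Hx; exists [:: (1, x, 1)]; split.
    by move=> p; rewrite inE => /eqP -> /=.
  by rewrite big_cons big_nil /= mul1r mulr1 addr0.
split.
  split.
  - move=> x; exact: N0P.
  - move=> x; split=> H b Hb; move: (H b Hb); rewrite /ad.
      by move/eqP; rewrite subr_eq0 => /eqP.
    by move=> ->; rewrite subrr.
  - split=> //; split.
    + by move=> x [].
    + by split=> //; apply: Ni0.
    + by move=> x y [Hx Nx] [Hy Ny]; split; [apply: (HaD) | apply: NiD].
    + by move=> c x [Hx Nx]; split; [apply: (HaZ) | apply: NiZ].
    + split=> s x Hs [Hx Nx]; split.
      * by apply: (HaL) => //; exists 0%N.
      * exact: (@NiM _ _ _ 0%N 0%N 0%N).
      * by apply: (HaR) => //; exists 0%N.
      * exact: (@NiM _ _ _ 0%N 0%N 0%N).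
  - split.
    + split.
      * by move=> x /a'a /HaN.
      * by exists [::]; split=> //; rewrite big_nil.
      * move=> x y [l1 [H1 ->]] [l2 [H2 ->]]; exists (l1 ++ l2); split.
          by move=> p; rewrite mem_cat => /orP [/H1|/H2].
        by rewrite big_cat.
      * move=> c x [l [Hl ->]].
        exists [seq (c *: p.1.1, p.1.2, p.2) | p <- l]; split.
          move=> q /mapP [p Hp ->] /=; have [? ? ?] := Hl p Hp; split=> //.
          exact: NZ.
        rewrite big_map scaler_sumr; apply: eq_bigr => p _ /=.
        by rewrite -!scalerAl.
      * split=> s x Hs [l [Hl ->]].
          exists [seq (s * p.1.1, p.1.2, p.2) | p <- l]; split.
            move=> q /mapP [p Hp ->] /=; have [? ? ?] := Hl p Hp; split=> //.
            exact: NM.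
          rewrite big_map mulr_sumr; apply: eq_bigr => p _ /=.
          by rewrite !mulrA.
        exists [seq (p.1.1, p.1.2, p.2 * s) | p <- l]; split.
          move=> q /mapP [p Hp ->] /=; have [? ? ?] := Hl p Hp; split=> //.
          exact: NM.
        rewrite big_map mulr_suml; apply: eq_bigr => p _ /=.
        by rewrite !mulrA.
    + case: a0nz => x [Hx xnz]; exists x; split=> //; exact: single.
    + move=> x; split.
        by move=> [/a'a Hx N0x]; split.
      by move=> Hx; split; [apply: single | case: Hx].
move=> HcN0 x [l [Hl ->]].
elim: l Hl => [|p l IH] Hl.
  by rewrite big_nil; split=> //; apply: Ni0.
rewrite big_cons.
have {IH} IH : set_inter a (NDelta_i A' 0) (\sum_(q <- l) ad q.1 q.2).
  by apply: IH => q Hq; apply: Hl; rewrite inE Hq orbT.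
have [Hp1 [Hp2a Hp2]] := Hl p (mem_head _ _).
case: IH => IHa IHN.
split; last apply: NiD => //.
  apply: (HaD) => //; rewrite /ad -scaleN1r; apply: (HaD).
    by apply: (HaL) => //; exists 1%N.
  by apply: (HaZ); apply: (HaR) => //; exists 1%N.
apply/N0P => b Hb.
have Hd := proj1 (NSP _ _ _ _ _) Hp1 b Hb.
have H2 := proj1 (N0P _ _ _ _) Hp2 b Hb.
have -> : ad p.1 p.2 = p.1 * p.2 - p.2 * p.1 by [].
rewrite adD adN !adM H2 mulr0 mul0r addr0 add0r.
by rewrite (HcN0 _ _ Hd Hp2) subrr.
Qed.
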